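(* Let $\sigma>0$, $\eta>0$, $\hat\alpha>0$, $h>0$, $r\ge0$, $a\in\mathbb{R}$, and for $\beta\ge0$ let $v_\beta$ denote the unique $C^1[0,\infty)$ solution of $\frac{\sigma^2}2v'(y)=\beta+\frac{\hat\alpha}4v(y)^2+\eta y(v(y)-\frac h\eta)-av(y)$, $y\ge0$, $v(0)=-r$. Let $\underline\beta_2=-ar-\frac{\hat\alpha r^2}4$. If $a>-\frac{\hat\alpha}4r$ then $\beta_1^*:=\inf\mathcal I_1>0$; if $a\le-\frac{\hat\alpha}4r$ then $\beta_2^*:=\inf\mathcal I_2>0$.
   Context: $\mathcal I_1=\{\beta\ge0: v_\beta$ is nondecreasing on $(0,\infty)\}$ and $\mathcal I_2=\{\beta>\underline\beta_2: v_\beta$ is nondecreasing on $(0,\infty)\}$. *)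

(* Defs.v *)
From Stdlib Require Import Reals.
From Coquelicot Require Import Coquelicot.
Open Scope R_scope.

Definition ric_rhs (eta ahat h a beta y w : R) : R :=
  beta + ahat / 4 * w ^ 2 + eta * y * (w - h / eta) - a * w.

(* v is a C^1[0,oo) solution of the ODE with v(0) = -r.
   At y > 0 the (two-sided) derivative exists and satisfies the ODE; at y = 0
   the right derivative exists and satisfies the ODE.  (Continuity of v' on
   [0,oo) is then automatic, since v' = (2/sigma^2) * ric_rhs(y, v y).) *)
Definition is_sol (sigma eta ahat h r a beta : R) (v : R -> R) : Prop :=
  v 0 = - r /\
  (forall y, 0 < y -> exists d, is_derive v y d /\
       sigma ^ 2 / 2 * d = ric_rhs eta ahat h a beta y (v y)) /\
  (exists d0, filterlim (fun t => (v t - v 0) / t) (at_right 0) (locally d0) /\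
       sigma ^ 2 / 2 * d0 = ric_rhs eta ahat h a beta 0 (v 0)).

Definition nondecr_pos (v : R -> R) : Prop :=
  forall x y, 0 < x -> x <= y -> v x <= v y.

(* "v_beta is nondecreasing on (0,oo)", where v_beta is the (unique) solution *)
Definition vbeta_nondecr (sigma eta ahat h r a beta : R) : Prop :=
  exists v, is_sol sigma eta ahat h r a beta v /\ nondecr_pos v.

Definition beta2_low (ahat r a : R) : R := - a * r - ahat * r ^ 2 / 4.

Definition I1 (sigma eta ahat h r a : R) : R -> Prop :=
  fun beta => 0 <= beta /\ vbeta_nondecr sigma eta ahat h r a beta.

Definition I2 (sigma eta ahat h r a : R) : R -> Prop :=
  fun beta => beta2_low ahat r a < beta /\ vbeta_nondecr sigma eta ahat h r a beta.

(* Main.v *)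
Require Import Defs.
From Stdlib Require Import Reals Lra Psatz.
From Coquelicot Require Import Coquelicot.
Open Scope R_scope.

Lemma rc (v : R -> R) d0 :
  filterlim (fun t => (v t - v 0) / t) (at_right 0) (locally d0) ->
  forall e, 0 < e -> exists d, 0 < d /\ forall t, 0 < t < d -> v 0 - e < v t < v 0 + e.
Proof.
  intros Hl e He.
  destruct (proj1 (filterlim_locally _ _) Hl (mkposreal 1 Rlt_0_1)) as [d Hd].
  exists (Rmin d (e / (Rabs d0 + 1))). split.
  { apply Rmin_pos. apply cond_pos. apply Rdiv_lt_0_compat; [lra| pose proof (Rabs_pos d0); lra]. }
  intros t [Ht1 Ht2].
  assert (Htd : t < d) by (eapply Rlt_le_trans; [exact Ht2| apply Rmin_l]).
  assert (Hte : t < e / (Rabs d0 + 1)) by (eapply Rlt_le_trans; [exact Ht2| apply Rmin_r]).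
  assert (Hb : ball 0 d t).
  { unfold ball; simpl; unfold AbsRing_ball, abs, minus, plus, opp; simpl.
    rewrite ?Rplus_0_r, ?Ropp_0, ?Rplus_0_r, Rabs_right by lra. exact Htd. }
  specialize (Hd t Hb Ht1). simpl in Hd.
  unfold ball in Hd; simpl in Hd; unfold AbsRing_ball, abs, minus, plus, opp in Hd; simpl in Hd.
  apply Rabs_def2 in Hd. destruct Hd as [Hd1 Hd2].
  pose proof (Rle_abs d0).
  assert (Hq : (v t - v 0) / t < Rabs d0 + 1) by lra.
  assert (Hq' : - (Rabs d0 + 1) < (v t - v 0) / t) by (pose proof (Rle_abs (-d0)); rewrite Rabs_Ropp in *; lra).
  apply Rmult_lt_compat_r with (r := t) in Hq; [|lra].
  apply Rmult_lt_compat_r with (r := t) in Hq'; [|lra].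
  unfold Rdiv in Hq, Hq'. rewrite Rmult_assoc, Rinv_l, Rmult_1_r in Hq, Hq' by lra.
  assert (t * (Rabs d0 + 1) < e).
  { apply Rmult_lt_compat_r with (r := Rabs d0 + 1) in Hte; [|pose proof (Rabs_pos d0); lra].
    unfold Rdiv in Hte. rewrite Rmult_assoc, Rinv_l, Rmult_1_r in Hte by (pose proof (Rabs_pos d0); lra). exact Hte. }
  split; lra.
Qed.

Lemma deriv_nonneg (v : R -> R) y d :
  0 < y -> nondecr_pos v -> is_derive v y d -> 0 <= d.
Proof.
  intros Hy Hm Hd. apply is_derive_Reals in Hd.
  destruct (Rle_or_lt 0 d) as [H|H]; [exact H|exfalso].
  destruct (Hd (- d / 2) ltac:(lra)) as [del Hdel].
  set (k := Rmin (del / 2) (y / 2)).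
  assert (Hk : 0 < k) by (apply Rmin_pos; pose proof (cond_pos del); lra).
  assert (Hk2 : k < del) by (unfold k; pose proof (Rmin_l (del/2) (y/2)); pose proof (cond_pos del); lra).
  specialize (Hdel k ltac:(lra) ltac:(rewrite Rabs_right; lra)).
  apply Rabs_def2 in Hdel. destruct Hdel as [H1 H2].
  assert (v y <= v (y + k)) by (apply Hm; lra).
  assert (0 <= (v (y + k) - v y) / k) by (apply Rdiv_le_0_compat; lra).
  lra.
Qed.

Lemma sol_rhs_nonneg sigma eta ahat h r a beta v :
  0 < sigma -> is_sol sigma eta ahat h r a beta v -> nondecr_pos v ->
  forall y, 0 < y -> 0 <= ric_rhs eta ahat h a beta y (v y).
Proof.
  intros Hs [_ [Hd _]] Hm y Hy.
  destruct (Hd y Hy) as [d [Hd1 Hd2]].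
  pose proof (deriv_nonneg v y d Hy Hm Hd1).
  rewrite <- Hd2. apply Rmult_le_pos; [|exact H].
  apply Rmult_le_pos; [apply pow2_ge_0| lra].
Qed.

Lemma sol_cont sigma eta ahat h r a beta v :
  is_sol sigma eta ahat h r a beta v -> forall y, 0 < y -> continuity_pt v y.
Proof.
  intros [_ [Hd _]] y Hy. destruct (Hd y Hy) as [d [Hd1 _]].
  apply continuity_pt_filterlim. apply (ex_derive_continuous (K:=R_AbsRing) (V:=R_NormedModule)). exists d. exact Hd1.
Qed.

Lemma mvt_bound sigma eta ahat h r a beta v eps y1 M :
  0 < sigma -> is_sol sigma eta ahat h r a beta v -> 0 < eps -> eps < y1 ->
  (forall y, eps <= y <= y1 -> ric_rhs eta ahat h a beta y (v y) <= M) ->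
  sigma ^ 2 / 2 * (v y1 - v eps) <= M * (y1 - eps).
Proof.
  intros Hs Hsol He Hey HM.
  pose proof Hsol as [_ [Hd _]].
  destruct (MVT_gen v eps y1 (Derive v)) as [c [Hc Heq]].
  - intros x Hx. rewrite Rmin_left, Rmax_right in Hx by lra.
    destruct (Hd x ltac:(lra)) as [d [Hd1 _]].
    rewrite (is_derive_unique v x d Hd1). exact Hd1.
  - intros x Hx. rewrite Rmin_left, Rmax_right in Hx by lra.
    apply (sol_cont _ _ _ _ _ _ _ _ Hsol). lra.
  - rewrite Rmin_left, Rmax_right in Hc by lra.
    destruct (Hd c ltac:(lra)) as [d [Hd1 Hd2]].
    rewrite (is_derive_unique v c d Hd1) in Heq.
    rewrite Heq. specialize (HM c Hc). rewrite <- Hd2 in HM.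
    replace (sigma ^ 2 / 2 * (d * (y1 - eps))) with ((sigma ^ 2 / 2 * d) * (y1 - eps)) by ring.
    apply Rmult_le_compat_r; lra.
Qed.

Lemma sol_lb sigma eta ahat h r a beta v :
  is_sol sigma eta ahat h r a beta v -> nondecr_pos v ->
  forall y, 0 < y -> - r <= v y.
Proof.
  intros [H0 [_ [d0 [Hl _]]]] Hm y Hy. unfold nondecr_pos in Hm.
  destruct (Rle_or_lt (-r) (v y)) as [H|H]; [exact H|exfalso].
  destruct (rc v d0 Hl (- r - v y) ltac:(lra)) as [d [Hd Ht]].
  set (t := Rmin (d/2) y).
  assert (0 < t) by (apply Rmin_pos; lra).
  assert (t <= y) by apply Rmin_r.
  assert (t < d) by (unfold t; pose proof (Rmin_l (d/2) y); lra).
  specialize (Ht t ltac:(split; lra)). specialize (Hm t y ltac:(lra) ltac:(lra)). subst. lra.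
Qed.

Lemma sol_unb sigma eta ahat h r a beta v :
  0 < sigma -> 0 < eta -> is_sol sigma eta ahat h r a beta v -> nondecr_pos v ->
  0 < ahat ->
  forall w0, w0 < h / eta -> exists y, 0 < y /\ w0 < v y.
Proof.
  intros Hs He Hsol Hm Ha w0 Hw0.
  destruct (Classical_Prop.classic (exists y, 0 < y /\ w0 < v y)) as [H|H]; [exact H|exfalso].
  assert (Hle : forall y, 0 < y -> v y <= w0).
  { intros y Hy. destruct (Rle_or_lt (v y) w0) as [H1|H1]; [exact H1|]. exfalso; apply H; eauto. }
  set (B := Rabs r + Rabs w0).
  set (D := h - eta * w0).
  assert (HD : 0 < D).
  { unfold D. apply Rmult_lt_compat_l with (r := eta) in Hw0; [|lra].
    unfold Rdiv in Hw0. rewrite <- Rmult_assoc, (Rmult_comm eta h), Rmult_assoc, Rinv_r, Rmult_1_r in Hw0 by lra. lra. }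
  set (C := Rabs beta + ahat / 4 * B ^ 2 + Rabs a * B + 1).
  assert (HB : 0 <= B) by (unfold B; pose proof (Rabs_pos r); pose proof (Rabs_pos w0); lra).
  set (y := C / D).
  assert (HC : 0 < C) by (unfold C; pose proof (Rabs_pos beta); pose proof (Rabs_pos a);
    assert (0 <= ahat / 4 * B ^ 2) by (apply Rmult_le_pos; [lra| apply pow2_ge_0]);
    assert (0 <= Rabs a * B) by (apply Rmult_le_pos; lra); lra).
  assert (Hy : 0 < y) by (unfold y; apply Rdiv_lt_0_compat; lra).
  pose proof (sol_rhs_nonneg _ _ _ _ _ _ _ _ Hs Hsol Hm y Hy) as Hn.
  pose proof (Hle y Hy) as Hv1. pose proof (sol_lb _ _ _ _ _ _ _ _ Hsol Hm y Hy) as Hv2.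
  unfold ric_rhs in Hn.
  set (w := v y) in *.
  assert (Hw : Rabs w <= B).
  { unfold B. apply Rabs_le. pose proof (Rle_abs r); pose proof (Rle_abs w0);
    pose proof (Rabs_pos r); pose proof (Rabs_pos w0); pose proof (Rle_abs (-r)); rewrite Rabs_Ropp in *; split; lra. }
  assert (Hw2 : w ^ 2 <= B ^ 2).
  { apply Rabs_le_between in Hw. nra. }
  assert (Haw : - a * w <= Rabs a * B).
  { apply Rle_trans with (Rabs (- a * w)). apply Rle_abs. rewrite Rabs_mult, Rabs_Ropp.
    apply Rmult_le_compat_l; auto using Rabs_pos. }
  assert (Hq : ahat / 4 * w ^ 2 <= ahat / 4 * B ^ 2) by (apply Rmult_le_compat_l; lra).
  assert (Hlin : eta * y * (w - h / eta) = y * (eta * w - h)) by (field; lra).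
  assert (Hlin2 : y * (eta * w - h) <= y * (- D)) by (apply Rmult_le_compat_l; [lra| unfold D; apply Rmult_le_compat_l with (r := eta) in Hv1; lra]).
  assert (HyD : y * D = C) by (unfold y; field; lra).
  rewrite Hlin in Hn. pose proof (Rle_abs beta). unfold C in HyD. clearbody y B D w. lra.
Qed.

Lemma sol_cross sigma eta ahat h r a beta v :
  0 < sigma -> 0 < eta -> 0 < ahat -> is_sol sigma eta ahat h r a beta v -> nondecr_pos v ->
  forall eps w0, 0 < eps -> v eps < w0 -> w0 < h / eta ->
  exists y1, eps < y1 /\ v y1 = w0.
Proof.
  intros Hs He Ha Hsol Hm eps w0 Heps Hv Hw. pose proof Hm as Hm0. unfold nondecr_pos in Hm.
  destruct (sol_unb _ _ _ _ _ _ _ _ Hs He Hsol Hm0 Ha w0 Hw) as [Y [HY HvY]].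
  assert (HeY : eps < Y).
  { destruct (Rlt_or_le eps Y) as [H|H]; [exact H|]. specialize (Hm Y eps HY H). lra. }
  destruct (Ranalysis5.IVT_interv (fun x => v x - w0) eps Y) as [z [Hz1 Hz2]].
  - intros x Hx. apply continuity_pt_minus. apply (sol_cont _ _ _ _ _ _ _ _ Hsol). lra.
    apply continuity_pt_const. intros u1 u2; reflexivity.
  - exact HeY.
  - simpl; lra.
  - simpl; lra.
  - exists z. simpl in Hz2. split; [|lra].
    destruct Hz1 as [Hz1 _]. destruct (Rle_lt_or_eq_dec _ _ Hz1) as [H|H]; [exact H|]. subst. lra.
Qed.

Lemma glb_pos (E : R -> Prop) d : 0 < d -> (forall b, E b -> d <= b) ->
  Rbar_lt (Finite 0) (Glb_Rbar E).
Proof.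
  intros Hd HE. destruct (Glb_Rbar_correct E) as [_ Hg].
  assert (H : Rbar_le (Finite d) (Glb_Rbar E)) by (apply Hg; intros x Hx; simpl; apply HE; exact Hx).
  destruct (Glb_Rbar E); simpl in *; try tauto; lra.
Qed.

Lemma neg_region sigma eta ahat h r a w0 :
  0 < sigma -> 0 < eta -> 0 < ahat -> 0 < h ->
  - r < w0 -> w0 < h / eta ->
  forall beta, vbeta_nondecr sigma eta ahat h r a beta ->
  - (ahat / 4 * w0 ^ 2 - a * w0) < beta.
Proof.
  intros Hs He Ha Hh Hw1 Hw2 beta [v [Hsol Hm]].
  pose proof Hsol as [H0 [_ [d0 [Hl _]]]].
  destruct (rc v d0 Hl (w0 + r) ltac:(lra)) as [d [Hd Ht]].
  specialize (Ht (d/2) ltac:(split; lra)).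
  destruct (sol_cross _ _ _ _ _ _ _ _ Hs He Ha Hsol Hm (d/2) w0 ltac:(lra) ltac:(lra) Hw2) as [y1 [Hy1 Hv]].
  pose proof (sol_rhs_nonneg _ _ _ _ _ _ _ _ Hs Hsol Hm y1 ltac:(lra)) as Hn.
  unfold ric_rhs in Hn. rewrite Hv in Hn.
  assert (Hlin : eta * y1 * (w0 - h / eta) = y1 * (eta * w0 - h)) by (field; lra).
  assert (Hneg : eta * w0 - h < 0).
  { apply Rmult_lt_compat_l with (r := eta) in Hw2; [|lra].
    replace (eta * (h / eta)) with h in Hw2 by (field; lra). lra. }
  assert (y1 * (eta * w0 - h) < 0).
  { replace 0 with (y1 * 0) by ring. apply Rmult_lt_compat_l; lra. }
  lra.
Qed.

Lemma caseA sigma eta ahat h r beta :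
  0 < sigma -> 0 < eta -> 0 < ahat -> 0 < h -> 0 < r ->
  vbeta_nondecr sigma eta ahat h r 0 beta ->
  Rmin 1 (sigma ^ 2 / 2 * (r / 2) * h / (1 + ahat / 4 * r ^ 2)) <= beta.
Proof.
  intros Hs He Ha Hh Hr [v [Hsol Hm]].
  destruct (Rle_or_lt 1 beta) as [Hb|Hb].
  { pose proof (Rmin_l 1 (sigma ^ 2 / 2 * (r / 2) * h / (1 + ahat / 4 * r ^ 2))); lra. }
  eapply Rle_trans; [apply Rmin_r|].
  pose proof Hsol as [H0 [_ [d0 [Hl _]]]].
  destruct (rc v d0 Hl (r / 2) ltac:(lra)) as [d [Hd Ht]].
  specialize (Ht (d/2) ltac:(split; lra)).
  assert (Hh2 : 0 < h / eta) by (apply Rdiv_lt_0_compat; lra).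
  destruct (sol_cross _ _ _ _ _ _ _ _ Hs He Ha Hsol Hm (d/2) 0 ltac:(lra) ltac:(lra) Hh2) as [y1 [Hy1 Hv]].
  pose proof (sol_rhs_nonneg _ _ _ _ _ _ _ _ Hs Hsol Hm y1 ltac:(lra)) as Hn.
  unfold ric_rhs in Hn. rewrite Hv in Hn.
  assert (Hy1b : h * y1 <= beta).
  { replace (eta * y1 * (0 - h / eta)) with (- (h * y1)) in Hn by (field; lra). nra. }
  assert (Hmv := mvt_bound sigma eta ahat h r 0 beta v (d/2) y1 (beta + ahat / 4 * r ^ 2) Hs Hsol ltac:(lra) Hy1).
  assert (HM : forall y, d / 2 <= y <= y1 -> ric_rhs eta ahat h 0 beta y (v y) <= beta + ahat / 4 * r ^ 2).
  { intros y Hy. unfold ric_rhs.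
    pose proof (sol_lb _ _ _ _ _ _ _ _ Hsol Hm y ltac:(lra)).
    assert (v y <= 0) by (rewrite <- Hv; apply Hm; lra).
    assert (v y ^ 2 <= r ^ 2) by nra.
    assert (ahat / 4 * v y ^ 2 <= ahat / 4 * r ^ 2) by (apply Rmult_le_compat_l; lra).
    assert (eta * y * (v y - h / eta) <= 0).
    { replace (eta * y * (v y - h / eta)) with (y * (eta * v y - h)) by (field; lra).
      assert (eta * v y <= 0) by nra. nra. }
    lra. }
  specialize (Hmv HM).
  set (S := sigma ^ 2 / 2) in *.
  assert (HS : 0 < S) by (unfold S; nra).
  set (K := 1 + ahat / 4 * r ^ 2).
  assert (HK : 1 <= K) by (unfold K; nra).
  assert (S * (r / 2) <= (beta + ahat / 4 * r ^ 2) * (y1 - d / 2)) by nra.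
  assert (Hb0 : 0 <= beta) by nra.
  assert ((beta + ahat / 4 * r ^ 2) * (y1 - d / 2) <= K * y1).
  { unfold K. assert (0 <= ahat / 4 * r ^ 2) by nra. nra. }
  assert (S * (r / 2) * h <= K * beta).
  { assert (S * (r/2) * h <= K * y1 * h) by nra. nra. }
  apply Rmult_le_reg_r with K; [lra|].
  unfold Rdiv. rewrite Rmult_assoc, Rinv_l, Rmult_1_r by lra. lra.
Qed.

Definition cB_A ahat a := ahat / 4 - a.
Definition cB_Y ahat h a := 2 * (1 + cB_A ahat a) / h.
Definition cB_C eta ahat h a := 2 * (1 + cB_A ahat a + eta * cB_Y ahat h a) * (1 + cB_A ahat a) / h.
Definition cB_d sigma eta ahat h a :=
  Rmin (Rmin 1 (h / (2 * eta))) (sigma ^ 2 / 2 / (4 * cB_C eta ahat h a)).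

Lemma caseB sigma eta ahat h a beta :
  0 < sigma -> 0 < eta -> 0 < ahat -> 0 < h -> a <= 0 -> 0 <= beta ->
  vbeta_nondecr sigma eta ahat h 0 a beta ->
  cB_d sigma eta ahat h a ^ 2 <= beta.
Proof.
  intros Hs He Ha Hh Ha0 Hb0 [v [Hsol Hm]].
  set (A := cB_A ahat a). assert (HA : 0 <= A) by (unfold A, cB_A; lra).
  set (Y := cB_Y ahat h a). assert (HY : 0 < Y) by (unfold Y, cB_Y; fold A; apply Rdiv_lt_0_compat; lra).
  set (C := cB_C eta ahat h a).
  assert (HC : 0 < C) by (unfold C, cB_C; fold A Y; apply Rdiv_lt_0_compat; [|lra];
      assert (0 < eta * Y) by nra; nra).
  set (S := sigma ^ 2 / 2). assert (HS : 0 < S) by (unfold S; nra).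
  set (d0 := cB_d sigma eta ahat h a).
  assert (Hd1 : d0 <= 1) by (unfold d0, cB_d; eapply Rle_trans; [apply Rmin_l| apply Rmin_l]).
  assert (Hd2 : d0 <= h / (2 * eta)) by (unfold d0, cB_d; eapply Rle_trans; [apply Rmin_l| apply Rmin_r]).
  assert (Hd3 : d0 <= S / (4 * C)) by (unfold d0, cB_d; fold C S; apply Rmin_r).
  assert (Hd0 : 0 < d0).
  { unfold d0, cB_d. fold C S. apply Rmin_pos; [apply Rmin_pos|]; try lra;
    apply Rdiv_lt_0_compat; lra. }
  assert (Hd2' : eta * d0 <= h / 2).
  { apply Rmult_le_compat_l with (r := eta) in Hd2; [|lra].
    replace (eta * (h / (2 * eta))) with (h / 2) in Hd2 by (field; lra). exact Hd2. }
  assert (Hd3' : d0 * C <= S / 4).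
  { apply Rmult_le_compat_r with (r := C) in Hd3; [|lra].
    replace (S / (4 * C) * C) with (S / 4) in Hd3 by (field; lra). exact Hd3. }
  destruct (Rle_or_lt (d0 ^ 2) beta) as [H|Hbl]; [exact H| exfalso].
  pose proof Hsol as [H0 [_ [e0 [Hl _]]]].
  destruct (rc v e0 Hl (d0 / 2) ltac:(lra)) as [d [Hd Ht]].
  specialize (Ht (d/2) ltac:(split; lra)).
  assert (Hw : d0 < h / eta).
  { apply Rmult_lt_reg_l with eta; [lra|]. replace (eta * (h / eta)) with h by (field; lra). lra. }
  destruct (sol_cross _ _ _ _ _ _ _ _ Hs He Ha Hsol Hm (d/2) d0 ltac:(lra) ltac:(lra) Hw) as [y1 [Hy1 Hv]].
  pose proof (sol_rhs_nonneg _ _ _ _ _ _ _ _ Hs Hsol Hm y1 ltac:(lra)) as Hn.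
  unfold ric_rhs in Hn. rewrite Hv in Hn.
  replace (eta * y1 * (d0 - h / eta)) with (y1 * (eta * d0 - h)) in Hn by (field; lra).
  set (P := beta + ahat / 4 * d0 ^ 2 - a * d0).
  assert (HyP : y1 * (h / 2) <= P) by (unfold P; nra).
  assert (HP : P <= d0 * (1 + A)).
  { unfold P, A, cB_A. assert (d0 ^ 2 <= d0) by nra.
    assert (ahat / 4 * d0 ^ 2 <= ahat / 4 * d0) by (apply Rmult_le_compat_l; lra). nra. }
  assert (Hy1b : y1 <= 2 * d0 * (1 + A) / h).
  { apply Rmult_le_reg_r with (h / 2); [lra|].
    replace (2 * d0 * (1 + A) / h * (h / 2)) with (d0 * (1 + A)) by (field; lra). lra. }
  assert (Hy1Y : y1 <= Y).
  { unfold Y, cB_Y; fold A. eapply Rle_trans; [exact Hy1b|].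
    unfold Rdiv. apply Rmult_le_compat_r; [left; apply Rinv_0_lt_compat; lra|]. nra. }
  set (M := P + eta * y1 * d0).
  assert (Hmv := mvt_bound sigma eta ahat h 0 a beta v (d/2) y1 M Hs Hsol ltac:(lra) Hy1).
  assert (HM : forall y, d / 2 <= y <= y1 -> ric_rhs eta ahat h a beta y (v y) <= M).
  { intros y Hy. unfold ric_rhs, M, P.
    pose proof (sol_lb _ _ _ _ _ _ _ _ Hsol Hm y ltac:(lra)).
    assert (v y <= d0) by (rewrite <- Hv; apply Hm; lra).
    assert (v y ^ 2 <= d0 ^ 2) by nra.
    assert (ahat / 4 * v y ^ 2 <= ahat / 4 * d0 ^ 2) by (apply Rmult_le_compat_l; lra).
    replace (eta * y * (v y - h / eta)) with (eta * y * v y - h * y) by (field; lra).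
    assert (eta * y * v y <= eta * y1 * d0).
    { apply Rmult_le_compat; try nra. }
    assert (- a * v y <= - a * d0) by nra.
    nra. }
  specialize (Hmv HM). fold S in Hmv.
  assert (HM2 : M <= d0 * (1 + A + eta * Y)).
  { unfold M. assert (eta * y1 * d0 <= eta * Y * d0).
    { apply Rmult_le_compat_r; [lra|]. apply Rmult_le_compat_l; lra. } nra. }
  assert (HM0 : 0 <= M).
  { unfold M. assert (0 <= P) by nra. assert (0 <= eta * y1 * d0) by (apply Rmult_le_pos; [|lra]; nra). lra. }
  assert (H1 : S * (d0 / 2) < M * y1).
  { assert (S * (d0/2) < S * (d0 - v (d/2))) by (apply Rmult_lt_compat_l; lra).
    assert (M * (y1 - d/2) <= M * y1) by (apply Rmult_le_compat_l; lra). rewrite Hv in Hmv. lra. }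
  assert (H2 : M * y1 <= d0 * (1 + A + eta * Y) * (2 * d0 * (1 + A) / h)).
  { apply Rmult_le_compat; lra. }
  assert (H3 : d0 * (1 + A + eta * Y) * (2 * d0 * (1 + A) / h) = d0 * d0 * C).
  { unfold C, cB_C. fold A Y. field. lra. }
  assert (S * (d0 / 2) < d0 * (d0 * C)) by lra.
  assert (d0 * (d0 * C) <= d0 * (S / 4)) by (apply Rmult_le_compat_l; lra).
  nra.
Qed.

Lemma cB_d_pos sigma eta ahat h a :
  0 < sigma -> 0 < eta -> 0 < ahat -> 0 < h -> a <= 0 -> 0 < cB_d sigma eta ahat h a.
Proof.
  intros Hs He Ha Hh Ha0.
  set (A := cB_A ahat a). assert (HA : 0 <= A) by (unfold A, cB_A; lra).
  set (Y := cB_Y ahat h a). assert (HY : 0 < Y) by (unfold Y, cB_Y; fold A; apply Rdiv_lt_0_compat; lra).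
  set (C := cB_C eta ahat h a).
  assert (HC : 0 < C) by (unfold C, cB_C; fold A Y; apply Rdiv_lt_0_compat; [|lra];
      assert (0 < eta * Y) by nra; nra).
  unfold cB_d. fold C. apply Rmin_pos; [apply Rmin_pos|]; try lra;
    apply Rdiv_lt_0_compat; nra.
Qed.

Theorem lemma21 (sigma eta ahat h r a : R)
  (Hsigma : 0 < sigma) (Heta : 0 < eta) (Hahat : 0 < ahat) (Hh : 0 < h)
  (Hr : 0 <= r) :
  (a > - (ahat / 4) * r ->
     Rbar_lt (Finite 0) (Glb_Rbar (I1 sigma eta ahat h r a))) /\
  (a <= - (ahat / 4) * r ->
     Rbar_lt (Finite 0) (Glb_Rbar (I2 sigma eta ahat h r a))).
Proof.
  assert (Hhe : 0 < h / eta) by (apply Rdiv_lt_0_compat; lra).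
  assert (Hhe2 : h / (2 * eta) < h / eta).
  { apply Rmult_lt_reg_r with eta; [lra|].
    replace (h / (2 * eta) * eta) with (h / 2) by (field; lra).
    replace (h / eta * eta) with h by (field; lra). lra. }
  assert (Hhe3 : 0 < h / (2 * eta)) by (apply Rdiv_lt_0_compat; lra).
  split.
  - intros Ha.
    destruct (Rtotal_order a 0) as [Hneg|[Hz|Hpos]].
    +
      set (w0 := 2 * a / ahat).
      assert (Hw0 : w0 < 0) by (unfold w0, Rdiv; assert (0 < /ahat) by (apply Rinv_0_lt_compat; lra); nra).
      assert (Hw1 : - r < w0).
      { unfold w0. apply Rmult_lt_reg_r with ahat; [lra|].
        replace (2 * a / ahat * ahat) with (2 * a) by (field; lra). nra. }
      apply glb_pos with (d := - (ahat / 4 * w0 ^ 2 - a * w0)).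
      { unfold w0. replace (- (ahat / 4 * (2 * a / ahat) ^ 2 - a * (2 * a / ahat))) with (a * a / ahat) by (field; lra).
        apply Rdiv_lt_0_compat; nra. }
      intros b [_ Hb]. left.
      apply (neg_region sigma eta ahat h r a w0); auto; lra.
    + subst a.
      assert (Hr0 : 0 < r) by nra.
      apply glb_pos with (d := Rmin 1 (sigma ^ 2 / 2 * (r / 2) * h / (1 + ahat / 4 * r ^ 2))).
      { apply Rmin_pos; [lra|]. apply Rdiv_lt_0_compat; [|nra].
        assert (0 < sigma ^ 2 / 2) by nra. assert (0 < sigma ^ 2 / 2 * (r/2)) by nra. nra. }
      intros b [_ Hb]. apply (caseA sigma eta ahat h r b); auto.
    + set (w0 := Rmin (2 * a / ahat) (h / (2 * eta))).
      assert (Hw0a : w0 <= 2 * a / ahat) by apply Rmin_l.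
      assert (Hw0b : w0 <= h / (2 * eta)) by apply Rmin_r.
      assert (Hw0 : 0 < w0) by (apply Rmin_pos; [apply Rdiv_lt_0_compat|]; lra).
      assert (Hq : ahat * w0 <= 2 * a).
      { apply Rmult_le_compat_l with (r := ahat) in Hw0a; [|lra].
        replace (ahat * (2 * a / ahat)) with (2 * a) in Hw0a by (field; lra). exact Hw0a. }
      apply glb_pos with (d := - (ahat / 4 * w0 ^ 2 - a * w0)).
      { nra. }
      intros b [_ Hb]. left.
      apply (neg_region sigma eta ahat h r a w0); auto; lra.
  - intros Ha.
    assert (Hb2 : 0 <= beta2_low ahat r a) by (unfold beta2_low; nra).
    destruct Hb2 as [Hb2|Hb2].
    + apply glb_pos with (d := beta2_low ahat r a); [exact Hb2|].
      intros b [Hb _]. lra.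
    + destruct Hr as [Hr|Hr].
      * assert (Hae : a = - (ahat / 4) * r).
        { unfold beta2_low in Hb2. apply Rmult_eq_reg_l with r; [|lra]. nra. }
        set (w0 := 2 * a / ahat).
        assert (Hw0e : w0 = - r / 2) by (unfold w0; rewrite Hae; field; lra).
        apply glb_pos with (d := - (ahat / 4 * w0 ^ 2 - a * w0)).
        { rewrite Hw0e, Hae. replace (- (ahat / 4 * (- r / 2) ^ 2 - - (ahat / 4) * r * (- r / 2))) with (ahat * (r * r) / 16) by field. apply Rdiv_lt_0_compat; [|lra]. apply Rmult_lt_0_compat; nra. }
        intros b [_ Hb]. left.
        apply (neg_region sigma eta ahat h r a w0); auto; lra.
      * subst r.
        apply glb_pos with (d := cB_d sigma eta ahat h a ^ 2).
        { apply pow_lt, cB_d_pos; auto; nra. }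
        intros b [Hb1 Hb]. unfold beta2_low in Hb1.
        apply caseB; auto; nra.
Qed.
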